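(* Let $J=\bigoplus_{(k,m)\in\mathbb{Z}_{\ge0}^2}J_{k,m}$ be a commutative bigraded ring. For $n\in\mathbb{Q}_{>0}$ put $J_n=\bigoplus_{(k,m):\,m=kn}J_{k,m}$ and $J_{\le n}=\bigoplus_{(k,m):\,m\le kn}J_{k,m}$. Fix $n\in\mathbb{Q}_{>0}$ and suppose that $J_{\le n}$ is finitely generated as an algebra over $J_{0,0}$. Then $J_n$ is finitely generated as an algebra over $J_{0,0}$.
   Context: The sums defining $J_n$ and $J_{\le n}$ range over pairs $(k,m)\in\mathbb{Z}_{\ge0}^2$; both are subrings of $J$ containing $J_{0,0}$. *)

(* Defs.v *)
From HB Require Import structures.
From mathcomp Require Import all_boot all_order all_algebra.
Set Implicit Arguments. Unset Strict Implicit. Unset Printing Implicit Defensive.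
Import Order.TTheory GRing.Theory Num.Theory.
Local Open Scope ring_scope.

(* A bigrading of a commutative ring J is given internally by a family of
   additive subgroups G k m (the pieces J_{k,m}, k m : nat) such that J is
   their (internal) direct sum and G k m * G k' m' ⊆ G (k+k') (m+m'). *)

Section Bigraded.
Variable J : comPzRingType.

Definition homog_sum (G : nat -> nat -> J -> Prop) (P : nat -> nat -> bool)
    (x : J) : Prop :=
  exists (s : seq (nat * nat)) (f : nat * nat -> J),
    [/\ uniq s, all (fun d => P d.1 d.2) s,
        (forall d, d \in s -> G d.1 d.2 (f d)) & x = \sum_(d <- s) f d].

Record bigrading (G : nat -> nat -> J -> Prop) : Prop := {
  bigr_zero : forall k m, G k m 0;
  bigr_sub  : forall k m x y, G k m x -> G k m y -> G k m (x - y);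
  bigr_one  : G 0%N 0%N 1;
  bigr_mul  : forall k m k' m' x y, G k m x -> G k' m' y ->
                G (k + k')%N (m + m')%N (x * y);
  bigr_span : forall x, homog_sum G (fun _ _ => true) x;
  bigr_indep : forall (s : seq (nat * nat)) (f : nat * nat -> J), uniq s ->
      (forall d, d \in s -> G d.1 d.2 (f d)) ->
      \sum_(d <- s) f d = 0 -> forall d, d \in s -> f d = 0
}.

Definition J_eq (G : nat -> nat -> J -> Prop) (n : rat) : J -> Prop :=
  homog_sum G (fun k m => (m%:R : rat) == k%:R * n).

Definition J_le (G : nat -> nat -> J -> Prop) (n : rat) : J -> Prop :=
  homog_sum G (fun k m => (m%:R : rat) <= k%:R * n).

Inductive gen_alg (A : J -> Prop) (gens : seq J) : J -> Prop :=
  | ga_base x : A x -> gen_alg A gens x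
  | ga_gen x : x \in gens -> gen_alg A gens x
  | ga_add x y : gen_alg A gens x -> gen_alg A gens y -> gen_alg A gens (x + y)
  | ga_opp x : gen_alg A gens x -> gen_alg A gens (- x)
  | ga_mul x y : gen_alg A gens x -> gen_alg A gens y -> gen_alg A gens (x * y).

Definition fin_gen_over (A B : J -> Prop) : Prop :=
  exists gens : seq J, (forall g, g \in gens -> B g) /\
    (forall x, B x <-> gen_alg A gens x).

End Bigraded.

(* Main.v *)
Require Import Defs.
From mathcomp Require Import all_boot all_order all_algebra.
From mathcomp Require Import ring lra.
Import Order.TTheory GRing.Theory Num.Theory.
Local Open Scope ring_scope.

Set Implicit Arguments.
Section Aux.
Variable J : comPzRingType.
Variable G : nat -> nat -> J -> Prop.
Hypothesis HG : bigrading G.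

Definition HSL (P : nat -> nat -> bool) (x : J) : Prop :=
  exists L : seq ((nat * nat) * J),
    (forall p, p \in L -> G p.1.1 p.1.2 p.2 /\ P p.1.1 p.1.2) /\
    x = \sum_(p <- L) p.2.

Lemma G_add k m x y : G k m x -> G k m y -> G k m (x + y).
Proof.
move=> Hx Hy; have -> : x + y = x - (0 - y) by rewrite sub0r opprK.
by apply: (bigr_sub HG) => //; apply: (bigr_sub HG) => //; apply: (bigr_zero HG).
Qed.

Lemma G_opp k m x : G k m x -> G k m (- x).
Proof. by move=> Hx; rewrite -sub0r; apply: (bigr_sub HG) => //; apply: (bigr_zero HG). Qed.

Lemma G_sum_cond k m (L : seq ((nat * nat) * J)) (Pr : pred ((nat*nat)*J)) F :
  (forall p, p \in L -> Pr p -> G k m (F p)) -> G k m (\sum_(p <- L | Pr p) F p).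
Proof.
elim: L => [|a L IH] H; first by rewrite big_nil; apply: (bigr_zero HG).
rewrite big_cons; case: ifP => Pa.
  apply: G_add; first by apply: H => //; rewrite inE eqxx.
  by apply: IH => p pL; apply: H; rewrite inE pL orbT.
by apply: IH => p pL; apply: H; rewrite inE pL orbT.
Qed.

Lemma HSL0 (P : nat -> nat -> bool) : HSL P 0.
Proof. by exists [::]; split => //; rewrite big_nil. Qed.

Lemma HSL_hom (P : nat -> nat -> bool) k m x : G k m x -> P k m -> HSL P x.
Proof.
move=> Gx Pkm; exists [:: ((k, m), x)]; split; last by rewrite big_seq1.
by move=> p; rewrite inE => /eqP ->.
Qed.

Lemma HSL_add (P : nat -> nat -> bool) x y : HSL P x -> HSL P y -> HSL P (x + y).
Proof.
move=> [L1 [H1 ->]] [L2 [H2 ->]]; exists (L1 ++ L2); split; last by rewrite big_cat.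
by move=> p; rewrite mem_cat => /orP [] ?; [apply: H1 | apply: H2].
Qed.

Lemma HSL_opp (P : nat -> nat -> bool) x : HSL P x -> HSL P (- x).
Proof.
move=> [L [H ->]]; exists [seq (p.1, - p.2) | p <- L]; split.
  move=> q /mapP [p pL ->] /=; have [Gp Pp] := H p pL; split => //.
  exact: G_opp.
by rewrite big_map /= sumrN.
Qed.

Lemma HSL_sub (P : nat -> nat -> bool) x y : HSL P x -> HSL P y -> HSL P (x - y).
Proof. by move=> Hx Hy; apply: HSL_add => //; apply: HSL_opp. Qed.

Lemma HSL_mul (P Q R : nat -> nat -> bool) x y :
  (forall k m k' m', P k m -> Q k' m' -> R (k + k')%N (m + m')%N) ->
  HSL P x -> HSL Q y -> HSL R (x * y).
Proof.
move=> HPQ [L1 [H1 ->]] [L2 [H2 ->]].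
exists [seq ((p.1.1 + q.1.1, p.1.2 + q.1.2)%N, p.2 * q.2) | p <- L1, q <- L2].
split.
  move=> r /allpairsP [[p q] /= [pL qL ->]] /=.
  have [Gp Pp] := H1 p pL; have [Gq Qq] := H2 q qL.
  by split; [apply: (bigr_mul HG) | apply: HPQ].
rewrite big_allpairs_dep /= mulr_suml; apply: eq_bigr => p _.
by rewrite mulr_sumr.
Qed.

Lemma HS_HSL (P : nat -> nat -> bool) x : homog_sum G P x -> HSL P x.
Proof.
move=> [s [f [_ /allP Ps Gs ->]]]; exists [seq (d, f d) | d <- s]; split.
  by move=> q /mapP [d ds ->] /=; split; [apply: Gs | apply: (Ps d ds)].
by rewrite big_map.
Qed.

Lemma sum_pred1_seq (U : seq (nat * nat)) a (c : J) :
  uniq U -> a \in U -> \sum_(d <- U) (if a == d then c else 0) = c.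
Proof.
move=> uU aU; rewrite (big_rem a) //= eqxx big1_seq ?addr0 //.
move=> d /= dU; case: eqP => // ead; subst d.
by rewrite mem_rem_uniqF in dU.
Qed.

Lemma HSL_HS (P : nat -> nat -> bool) x : HSL P x -> homog_sum G P x.
Proof.
move=> [L [H ->]].
exists (undup [seq p.1 | p <- L]),
       (fun d => \sum_(p <- L | p.1 == d) p.2).
split.
- exact: undup_uniq.
- apply/allP => d; rewrite mem_undup => /mapP [p pL ->].
  by have [_ ?] := H p pL.
- move=> d dU; apply: G_sum_cond => p pL /eqP <-.
  by have [? _] := H p pL.
- rewrite (eq_bigr (fun d => \sum_(p <- L) (if p.1 == d then p.2 else 0)));
    last by move=> d _; rewrite big_mkcond.
  rewrite exchange_big /=; apply: eq_big_seq => p pL.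
  apply/esym/sum_pred1_seq; first exact: undup_uniq.
  by rewrite mem_undup; apply: map_f.
Qed.

Lemma HSL_mono (P Q : nat -> nat -> bool) x :
  (forall k m, P k m -> Q k m) -> HSL P x -> HSL Q x.
Proof.
move=> PQ [L [H ->]]; exists L; split => // p pL.
by have [? ?] := H p pL; split => //; apply: PQ.
Qed.

Lemma HSL_disj (P Q : nat -> nat -> bool) z :
  (forall k m, P k m -> Q k m -> False) -> HSL P z -> HSL Q z -> z = 0.
Proof.
move=> PQ /HSL_HS [s1 [f1 [u1 /allP P1 G1 E1]]] /HSL_HS [s2 [f2 [u2 /allP P2 G2 E2]]].
have dis : forall d, d \in s1 -> d \in s2 -> False.
  by move=> d d1 d2; apply: (PQ d.1 d.2); [apply: P1 | apply: P2].
pose f d := if d \in s1 then f1 d else - f2 d.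
have uc : uniq (s1 ++ s2).
  rewrite cat_uniq u1 u2 /= andbT; apply/hasPn => d d2 /=.
  by apply/negP => d1; apply: (dis d).
have Gf : forall d, d \in s1 ++ s2 -> G d.1 d.2 (f d).
  move=> d; rewrite /f mem_cat; case: ifP => d1 /=; first by move=> _; apply: G1.
  by move=> d2; apply: G_opp; apply: G2.
have S0 : \sum_(d <- s1 ++ s2) f d = 0.
  rewrite big_cat /=.
  have -> : \sum_(d <- s1) f d = \sum_(d <- s1) f1 d.
    by apply: eq_big_seq => d d1; rewrite /f d1.
  have -> : \sum_(d <- s2) f d = \sum_(d <- s2) - f2 d.
    apply: eq_big_seq => d d2; rewrite /f; case: ifP => // d1; exfalso; exact: (dis d).
  by rewrite sumrN -E1 -E2 subrr.
have := bigr_indep HG uc Gf S0 => Hf.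
rewrite E1 big1_seq // => d /= d1; have := Hf d; rewrite /f d1 mem_cat d1.
by apply.
Qed.

Lemma ga_mono (A : J -> Prop) g1 g2 x :
  (forall g, g \in g1 -> gen_alg A g2 g) -> gen_alg A g1 x -> gen_alg A g2 x.
Proof.
move=> H; elim => {x}.
- by move=> x Ax; apply: ga_base.
- by move=> x xg; apply: H.
- by move=> x y _ Hx _ Hy; apply: ga_add.
- by move=> x _ Hx; apply: ga_opp.
- by move=> x y _ Hx _ Hy; apply: ga_mul.
Qed.

Lemma ga_sum (A : J -> Prop) gens (L : seq ((nat*nat)*J)) (F : (nat*nat)*J -> J) :
  A 0 -> (forall p, p \in L -> gen_alg A gens (F p)) ->
  gen_alg A gens (\sum_(p <- L) F p).
Proof.
move=> A0; elim: L => [|a L IH] H; first by rewrite big_nil; apply: ga_base.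
rewrite big_cons; apply: ga_add; first by apply: H; rewrite inE eqxx.
by apply: IH => p pL; apply: H; rewrite inE pL orbT.
Qed.

End Aux.
Arguments HSL {J}.
Arguments HSL_hom {J G P k m x}.
Arguments HSL0 {J G P}.
Arguments HSL_mono {J G P Q x}.
Arguments HSL_disj {J G} HG {P Q z}.
Arguments HSL_mul {J G} HG {P Q R x y}.

Section Main.
Variable J : comPzRingType.
Variable G : nat -> nat -> J -> Prop.
Hypothesis HG : bigrading G.
Variable n : rat.

Definition Peq := fun k m : nat => (m%:R : rat) == k%:R * n.
Definition Ple := fun k m : nat => (m%:R : rat) <= k%:R * n.
Definition Pgt := fun k m : nat => (m%:R : rat) < k%:R * n.

Lemma eqeq k m k' m' : Peq k m -> Peq k' m' -> Peq (k + k')%N (m + m')%N.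
Proof. by rewrite /Peq => /eqP a /eqP b; apply/eqP; rewrite !natrD a b mulrDl. Qed.
Lemma eqgt k m k' m' : Peq k m -> Pgt k' m' -> Pgt (k + k')%N (m + m')%N.
Proof. rewrite /Peq /Pgt !natrD mulrDl => /eqP a b; lra. Qed.
Lemma gteq k m k' m' : Pgt k m -> Peq k' m' -> Pgt (k + k')%N (m + m')%N.
Proof. rewrite /Peq /Pgt !natrD mulrDl => a /eqP b; lra. Qed.
Lemma gtgt k m k' m' : Pgt k m -> Pgt k' m' -> Pgt (k + k')%N (m + m')%N.
Proof. rewrite /Peq /Pgt !natrD mulrDl => a b; lra. Qed.
Lemma eqgtF k m : Peq k m -> Pgt k m -> False.
Proof. rewrite /Peq /Pgt => /eqP a b; lra. Qed.
Lemma eqle k m : Peq k m -> Ple k m.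
Proof. rewrite /Peq /Ple => /eqP a; lra. Qed.
Lemma le_neq_gt k m : Ple k m -> ~~ Peq k m -> Pgt k m.
Proof. by rewrite /Peq /Ple /Pgt => a b; rewrite lt_def eq_sym b a. Qed.
Lemma Peq00 : Peq 0%N 0%N.
Proof. by rewrite /Peq mul0r. Qed.

Variable H : seq ((nat * nat) * J).
Hypothesis HH : forall p, p \in H -> G p.1.1 p.1.2 p.2 /\ Ple p.1.1 p.1.2.
Definition H0 := [seq p.2 | p <- H & Peq p.1.1 p.1.2].

Lemma decomp x : gen_alg (G 0%N 0%N) [seq p.2 | p <- H] x ->
  exists y z, [/\ x = y + z, gen_alg (G 0%N 0%N) H0 y, HSL G Peq y & HSL G Pgt z].
Proof.
have A0 : G 0%N 0%N 0 by apply: (bigr_zero HG).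
elim => {x}.
- move=> x Ax; exists x, 0; split; first by rewrite addr0.
  + exact: ga_base.
  + exact: (HSL_hom Ax Peq00).
  + exact: HSL0.
- move=> x /mapP [p pH ->]; have [Gp Lp] := HH p pH.
  case E: (Peq p.1.1 p.1.2).
    exists p.2, 0; split; first by rewrite addr0.
    + by apply: ga_gen; rewrite /H0 map_f // mem_filter E.
    + exact: (HSL_hom Gp E).
    + exact: HSL0.
  exists 0, p.2; split; first by rewrite add0r.
  + exact: ga_base.
  + exact: HSL0.
  + by apply: (HSL_hom Gp); apply: le_neq_gt => //; rewrite E.
- move=> x1 x2 _ [y1 [z1 [-> g1 e1 t1]]] _ [y2 [z2 [-> g2 e2 t2]]].
  exists (y1 + y2), (z1 + z2); split; first by rewrite addrACA.
  + exact: ga_add.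
  + exact: HSL_add.
  + exact: HSL_add.
- move=> x _ [y [z [-> g e t]]]; exists (- y), (- z); split; first by rewrite opprD.
  + exact: ga_opp.
  + exact: HSL_opp.
  + exact: HSL_opp.
- move=> x1 x2 _ [y1 [z1 [-> g1 e1 t1]]] _ [y2 [z2 [-> g2 e2 t2]]].
  exists (y1 * y2), (y1 * z2 + z1 * y2 + z1 * z2); split.
  + by rewrite mulrDl !mulrDr !addrA.
  + exact: ga_mul.
  + exact: (HSL_mul HG eqeq).
  + apply: HSL_add; first apply: HSL_add.
    * exact: (HSL_mul HG eqgt).
    * exact: (HSL_mul HG gteq).
    * exact: (HSL_mul HG gtgt).
Qed.

End Main.

Lemma build (J : comPzRingType) (G : nat -> nat -> J -> Prop) (n : rat)
  (HG : bigrading G) (gens : seq J) :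
  (forall g, g \in gens -> J_le G n g) ->
  exists H : seq ((nat * nat) * J),
    (forall p, p \in H -> G p.1.1 p.1.2 p.2 /\ Ple n p.1.1 p.1.2) /\
    (forall g, g \in gens -> gen_alg (G 0%N 0%N) [seq p.2 | p <- H] g).
Proof.
elim: gens => [|g gens IH] Hg; first by exists [::]; split.
have [L [HL Eg]] := HS_HSL (Hg g (mem_head g gens)).
have [H' [HH' Hgen']] : exists H : seq ((nat * nat) * J),
    (forall p, p \in H -> G p.1.1 p.1.2 p.2 /\ Ple n p.1.1 p.1.2) /\
    (forall g, g \in gens -> gen_alg (G 0%N 0%N) [seq p.2 | p <- H] g).
  by apply: IH => g' g'in; apply: Hg; rewrite inE g'in orbT.
exists (L ++ H'); split.
  by move=> p; rewrite mem_cat => /orP [] pin; [apply: HL | apply: HH'].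
move=> g'; rewrite inE => /orP [/eqP -> | g'in].
  rewrite Eg; apply: ga_sum; first by apply: (bigr_zero HG).
  by move=> p pL; apply: ga_gen; rewrite map_cat mem_cat map_f.
apply: ga_mono (Hgen' g' g'in) => h hin; apply: ga_gen.
by rewrite map_cat mem_cat hin orbT.
Qed.

Unset Implicit Arguments.

Theorem proposition6p10 (J : comPzRingType) (G : nat -> nat -> J -> Prop)
    (n : rat) :
  bigrading G -> 0 < n ->
  fin_gen_over (G 0%N 0%N) (J_le G n) ->
  fin_gen_over (G 0%N 0%N) (J_eq G n).
Proof.
move=> HG npos [gens [Hg Hiff]].
have [H [HH Hgen]] := @build J G n HG gens Hg.
exists (@H0 J n H); split.
  move=> g /mapP [p]; rewrite mem_filter => /andP [E pH] ->.
  have [Gp _] := HH p pH.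
  exact: (HSL_HS HG (HSL_hom Gp E)).
move=> x; split.
  move=> xe.
  have xl : J_le G n x := HSL_HS HG (HSL_mono (@eqle n) (HS_HSL xe)).
  have ga' := ga_mono Hgen ((Hiff x).1 xl).
  have [y [z [exy gy ey tz]]] := @decomp J G HG n H HH x ga'.
  have z0 : z = 0.
    apply: (HSL_disj HG (@eqgtF n)) tz.
    have -> : z = x - y by rewrite exy [y + z]addrC addrK.
    exact: (HSL_sub HG (HS_HSL xe) ey).
  by rewrite exy z0 addr0.
move=> ga; apply: (HSL_HS HG); elim: ga => {x}.
- by move=> x Ax; apply: (HSL_hom Ax (Peq00 n)).
- move=> x /mapP [p]; rewrite mem_filter => /andP [E pH] ->.
  have [Gp _] := HH p pH.
  exact: (HSL_hom Gp E).
- by move=> x y _ Hx _ Hy; apply: HSL_add.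
- by move=> x _ Hx; exact: (HSL_opp HG Hx).
- by move=> x y _ Hx _ Hy; apply: (HSL_mul HG (@eqeq n)).
Qed.
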